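(* Let $\pi : (\mathbb Z_2^2)^* \to \mathbb Z_3$ be a bijection and let $g,h \in (\mathbb Z_2^2)^*$ with $g\neq h$. Suppose $q\equiv 1\pmod 6$ is a prime power and $\rho$ is a primitive element of $\mathbb F_q$. Then $c^3_q\big(\pi(h-g)-\pi(g),\ \pi(h)-\pi(g)\big) = c^3_q(1,2)$.
   Context: $(\mathbb Z_2^2)^*=\mathbb Z_2^2\setminus\{0\}$. Write $q=6r+1$; for $i\in\mathbb Z_3$, $C^3_q(i)=\{\rho^{3j+i}: 0\le j\le 2r-1\}$, and for $a,b\in\mathbb Z_3$, $c^3_q(a,b)=|(C^3_q(a)+1)\cap C^3_q(b)|$. *)

(* Defs.v *)
From HB Require Import structures.
From mathcomp Require Import all_boot all_order all_algebra all_field.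
Set Implicit Arguments. Unset Strict Implicit. Unset Printing Implicit Defensive.
Import GRing.Theory.
Local Open Scope ring_scope.

Definition Z22 : Type := ('Z_2 * 'Z_2)%type.

Definition cyc_r (F : finFieldType) : nat := ((#|F| - 1) %/ 6)%N.

Definition cycC (F : finFieldType) (rho : F) (i : 'Z_3) : {set F} :=
  [set rho ^+ (3 * j + i)%N | j : 'I_(2 * cyc_r F)].

Definition cycnum (F : finFieldType) (rho : F) (a b : 'Z_3) : nat :=
  #|[set x + 1 | x in cycC rho a] :&: cycC rho b|.

(* Main.v *)
Require Import Defs.
From HB Require Import structures.
From mathcomp Require Import all_boot all_order all_algebra all_field.
From mathcomp Require Import zify ring.
Import GRing.Theory.
Local Open Scope ring_scope.

Lemma z3_cases (a b c : 'Z_3) : a != b -> c != b -> a != c ->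
  (((a - b == 1) && (c - b == 2)) || ((a-b == 2) && (c - b == 1))).
Proof. case: a b c => [[|[|[|a]]] Ha] [[|[|[|b]]] Hb] [[|[|[|c]]] Hc] //=. Qed.

Lemma z22_cases (u v : Z22) : u != 0 -> v != 0 -> u != v ->
  [&& u - v != 0, u - v != v & u - v != u].
Proof. case: u v => [[[|[|u]] Hu] [[|[|u']] Hu']] [[[|[|v]] Hv] [[|[|v']] Hv']] //=. Qed.

Section Cyc.
Variables (F : finFieldType) (hq : (#|F| %% 6 = 1)%N)
  (rho : F) (rho_prim : (#|F|.-1).-primitive_root rho).

Lemma hn : (#|F|.-1 = 6 * cyc_r F)%N.
Proof. rewrite /cyc_r; have := hq; lia. Qed.

Lemma memC_intro (k : nat) (i : 'Z_3) : (k %% 3 = i)%N -> rho ^+ k \in cycC rho i.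
Proof.
move=> hk; rewrite -(prim_expr_mod rho_prim) hn.
have hi : (i < 3)%N := ltn_ord i.
have hr : (0 < cyc_r F)%N by rewrite /cyc_r; have := hq; have h1F : (1 < #|F|)%N := finNzRing_gt1 F; lia.
set m := (k %% (6 * cyc_r F))%N.
have hm : (m < 6 * cyc_r F)%N by rewrite ltn_mod; lia.
have hm3 : (m %% 3 = i)%N by rewrite /m modn_dvdm ?hk // dvdn_mulr.
have hj : (m %/ 3 < 2 * cyc_r F)%N by lia.
apply/imsetP; exists (Ordinal hj) => //=.
by rewrite [in LHS](divn_eq m 3) hm3 mulnC.
Qed.

Lemma memC_elim (x : F) (i : 'Z_3) : x \in cycC rho i ->
  exists k, x = rho ^+ k /\ (k %% 3 = i)%N.
Proof.
case/imsetP => j _ ->; exists (3 * j + i)%N; split => //.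
have hi : (i < 3)%N := ltn_ord i; lia.
Qed.

Lemma neg1 : rho ^+ (3 * cyc_r F) = -1.
Proof.
have hr : (0 < cyc_r F)%N by rewrite /cyc_r; have := hq; have h1F : (1 < #|F|)%N := finNzRing_gt1 F; lia.
have h2 : (rho ^+ (3 * cyc_r F)) ^+ 2 == 1.
  by rewrite -exprM -(prim_order_dvd rho_prim) hn; apply/dvdnP; exists 1%N; lia.
move: h2; rewrite sqrf_eq1 -(prim_order_dvd rho_prim) hn.
have -> : (6 * cyc_r F %| 3 * cyc_r F)%N = false.
  apply/negbTE/negP => /dvdn_leq; lia.
by move/eqP.
Qed.

Lemma memC_opp (x : F) (i : 'Z_3) : x \in cycC rho i -> - x \in cycC rho i.
Proof.
case/memC_elim => k [-> hk].
rewrite -mulN1r -neg1 -exprD; apply: memC_intro; lia.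
Qed.

Lemma cycnum_le (a b : 'Z_3) : (cycnum rho b a <= cycnum rho a b)%N.
Proof.
rewrite /cycnum.
set S := (X in (#|X| <= _)%N).
have finj : injective (fun y : F => 1 - y).
  by move=> y z /= /addrI /oppr_inj.
rewrite -(card_imset S finj); apply: subset_leq_card.
apply/subsetP => z /imsetP [y]; rewrite inE => /andP [/imsetP [x hx ->] hy] ->.
rewrite inE; apply/andP; split.
  apply/imsetP; exists (- (x + 1)); first exact: memC_opp.
  by rewrite addrC.
have -> : 1 - (x + 1) = - x by rewrite opprD addrCA subrr addr0.
exact: memC_opp.
Qed.

Lemma cycnum_sym (a b : 'Z_3) : cycnum rho a b = cycnum rho b a.
Proof. by apply/eqP; rewrite eqn_leq !cycnum_le. Qed.

End Cyc.

Theorem proposition3p5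
  (pi : Z22 -> 'Z_3)
  (pi_inj : {in [pred x : Z22 | x != 0] &, injective pi})
  (pi_surj : forall z : 'Z_3, exists2 x : Z22, x != 0 & pi x = z)
  (g h : Z22) (g_nz : g != 0) (h_nz : h != 0) (gh : g != h)
  (F : finFieldType) (hq : (#|F| %% 6 = 1)%N)
  (rho : F) (rho_prim : (#|F|.-1).-primitive_root rho) :
  cycnum rho (pi (h - g) - pi g) (pi h - pi g) = cycnum rho 1 2.
Proof.
have hg : h != g by rewrite eq_sym.
case/and3P: (z22_cases h g h_nz g_nz hg) => h1 h2 h3.
have ne : forall u v : Z22, u != 0 -> v != 0 -> u != v -> pi u != pi v.
  move=> u v hu hv huv; apply/negP => /eqP E.
  have := pi_inj u v; rewrite !inE => /(_ hu hv E) E'.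
  by move: huv; rewrite E' eqxx.
case/orP: (z3_cases _ _ _ (ne _ _ h1 g_nz h2) (ne _ _ h_nz g_nz hg) (ne _ _ h1 h_nz h3))
  => /andP [/eqP -> /eqP ->] //.
exact: cycnum_sym.
Qed.
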